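(* Let $q$ be a prime power, $m,\eta,\ell,k\ge1$, $n=\ell\eta$, $\mu=\min\{m,\eta\}$, and integers $0\le w\le v\le\ell\mu$. Let $\alpha$ be a probability mass function on $\mathcal{W}(v,\ell,\mu)$ and let $\boldsymbol{\mathcal{F}}=\mathcal{F}_1\times\dots\times\mathcal{F}_\ell$ be drawn by first drawing $\mathbf{v}\sim\alpha$ and then each $\mathcal{F}_i$ independently and uniformly among the $v_i$-dimensional subspaces of $\mathbb{F}_q^\mu$. Let $\mathbf{y}\in\mathbb{F}_{q^m}^n$ be fixed, and let $\mathbf{c}_1,\dots,\mathbf{c}_{q^{mk}-1}$ be independent uniformly random vectors of $\mathbb{F}_{q^m}^n$ (the codewords of a random code other than the transmitted one), independent of $\boldsymbol{\mathcal{F}}$. Let $\mathcal{X}$ be the event that there exists $j$ such that $\mathrm{wt}_{\Sigma R}(\mathbf{y}-\mathbf{c}_j)=w$ and the support $\mathcal{E}'_1\times\dots\times\mathcal{E}'_\ell$ of $\mathbf{y}-\mathbf{c}_j$ satisfies $\mathcal{E}'_i\subseteq\mathcal{F}_i$ for all $i$. Then $$\Pr[\mathcal{X}]\le q^{m(k-n)}\sum_{\mathbf{w}\in\mathcal{W}(w,\ell,\mu)}\bar\varphi(\mathbf{w})\prod_{i=1}^{\ell}\mathrm{NM}_q(m,\eta,w_i),$$ where $\bar\varphi(\mathbf{w})\coloneqq\sum_{\mathbf{v}\in\mathcal{W}(v,\ell,\mu)}\alpha(\mathbf{v})\prod_{i=1}^{\ell}\Phi_\mu(w_i\subseteq v_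i)$.
   Context: Gaussian binomial: $\begin{bmatrix}a\\ b\end{bmatrix}_q=\prod_{i=0}^{b-1}\frac{q^{a-i}-1}{q^{b-i}-1}$. $\mathcal{W}(w,\ell,\mu)\coloneqq\{\mathbf{w}\in\{0,\dots,\mu\}^{\ell}:\sum_i w_i=w\}$. $\Phi_\mu(a\subseteq b)\coloneqq\begin{bmatrix}b\\ a\end{bmatrix}_q/\begin{bmatrix}\mu\\ a\end{bmatrix}_q$ if $a\le b$ and $0$ if $a>b$. $\mathrm{NM}_q(m,\eta,r)\coloneqq\prod_{j=0}^{r-1}\frac{(q^m-q^j)(q^\eta-q^j)}{q^r-q^j}$ (number of $m\times\eta$ matrices over $\mathbb{F}_q$ of rank $r$). A vector $\mathbf{x}\in\mathbb{F}_{q^m}^{n}$ is split into $\ell$ consecutive blocks of length $\eta$; via a fixed $\mathbb{F}_q$-basis of $\mathbb{F}_{q^m}$ each block is an $m\times\eta$ matrix over $\mathbb{F}_q$. The sum-rank weight $\mathrm{wt}_{\Sigma R}(\mathbf{x})$ is the sum of the ranks of these block matrices. The support of $\mathbf{x}$ is $\mathcal{E}_1\times\dots\times\mathcal{E}_\ell$, where $\mathcal{E}_i\subseteq\mathbb{F}_q^\mu$ is the row space of the $i$-th block matrix if $\eta\le m$ and its column space if $\eta>m$. *)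

(* Defs.v *)
From HB Require Import structures.
From mathcomp Require Import all_boot all_order all_algebra.
Set Implicit Arguments. Unset Strict Implicit. Unset Printing Implicit Defensive.
Import Order.TTheory GRing.Theory Num.Theory.
Local Open Scope ring_scope.

(* F_{q^m}^n is modelled, through a fixed F_q-basis of F_{q^m}, as the
   l-tuple of its m x eta blocks over F_q (= K, #|K| = q). *)
Definition vecT (K : finFieldType) (m eta l : nat) :=
  {ffun 'I_l -> 'M[K]_(m, eta)}.

Definition Wset (l mu w : nat) : {set {ffun 'I_l -> 'I_mu.+1}} :=
  [set x : {ffun 'I_l -> 'I_mu.+1} | (\sum_(i < l) (x i : nat) == w)%N].

(* Subspaces of F_q^mu of dimension d, each represented canonically by the
   square matrix <<U>> whose row space it is. *)
Definition subspaces (K : finFieldType) (mu d : nat) : {set 'M[K]_mu} :=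
  [set U : 'M[K]_mu | (<<U>>%MS == U) && (\rank U == d)%N].

(* Support subspace E of an m x eta block, in F_q^mu with mu = minn m eta:
   row space if eta <= m, column space otherwise. conform_mx is the identity
   cast in the relevant branch (dimensions agree there). *)
Definition blk_supp (K : finFieldType) (m eta : nat) (B : 'M[K]_(m, eta))
  : 'M[K]_(minn m eta) :=
  if (eta <= m)%N then <<conform_mx (0 : 'M[K]_(m, minn m eta)) B>>%MS
  else <<conform_mx (0 : 'M[K]_(eta, minn m eta)) B^T>>%MS.

Definition wtSR (K : finFieldType) (m eta l : nat) (x : vecT K m eta l) : nat :=
  (\sum_(i < l) \rank (x i))%N.

Definition good (K : finFieldType) (m eta l w : nat)
  (F : {ffun 'I_l -> 'M[K]_(minn m eta)}) (x : vecT K m eta l) : bool :=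
  (wtSR x == w) && [forall i, (blk_supp (x i) <= F i)%MS].

Definition prob_codewords (R : realFieldType) (K : finFieldType) (m eta l w N : nat)
  (F : {ffun 'I_l -> 'M[K]_(minn m eta)}) (y : vecT K m eta l) : R :=
  (#|[set c : {ffun 'I_N -> vecT K m eta l} |
        [exists j, good w F [ffun i => y i - c j i]]]|)%:R
  / (#|{: vecT K m eta l}| ^ N)%:R.

Definition probX (R : realFieldType) (K : finFieldType) (m eta l v w N : nat)
  (alpha : {ffun 'I_l -> 'I_(minn m eta).+1} -> R) (y : vecT K m eta l) : R :=
  \sum_(vv in Wset l (minn m eta) v) alpha vv *
    \sum_(F : {ffun 'I_l -> 'M[K]_(minn m eta)}
           | [forall i, F i \in subspaces K (minn m eta) (vv i)])
      ((\prod_(i < l) (#|subspaces K (minn m eta) (vv i)|)%:R)^-1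
       * prob_codewords R w N F y).

Definition gauss_binom (R : realFieldType) (q a b : nat) : R :=
  \prod_(i < b) (((q%:R : R) ^+ (a - i) - 1) / ((q%:R : R) ^+ (b - i) - 1)).

Definition Phi (R : realFieldType) (q mu a b : nat) : R :=
  if (a <= b)%N then gauss_binom R q b a / gauss_binom R q mu a else 0.

Definition NM (R : realFieldType) (q m eta r : nat) : R :=
  \prod_(j < r) ((((q%:R : R) ^+ m - (q%:R) ^+ j) * ((q%:R : R) ^+ eta - (q%:R) ^+ j))
                 / ((q%:R : R) ^+ r - (q%:R) ^+ j)).

Definition phibar (R : realFieldType) (q l mu v : nat)
  (alpha : {ffun 'I_l -> 'I_mu.+1} -> R) (ww : {ffun 'I_l -> 'I_mu.+1}) : R :=
  \sum_(vv in Wset l mu v) alpha vv * \prod_(i < l) Phi R q mu (ww i) (vv i).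

(* Main.v *)
Require Import Defs.
From HB Require Import structures.
From mathcomp Require Import all_boot all_order all_algebra.
From mathcomp Require Import ring zify.
Set Implicit Arguments. Unset Strict Implicit. Unset Printing Implicit Defensive.
Import Order.TTheory GRing.Theory Num.Theory.
Local Open Scope ring_scope.

Section Core.
Variable K : finFieldType.

Lemma card_rowspace n s (A : 'M[K]_(n,s)) :
  #|[set u : 'rV[K]_s | (u <= A)%MS]| = (#|K| ^ \rank A)%N.
Proof.
have -> : [set u : 'rV[K]_s | (u <= A)%MS] =
   (fun w : 'rV[K]_(\rank A) => w *m row_base A) @: setT.
  apply/setP => u; rewrite inE; apply/idP/imsetP.
    rewrite -(eq_row_base A) => /submxP [D ->]; by exists D.
  by case=> D _ ->; rewrite -(eq_row_base A) submxMl.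
rewrite card_imset; last exact: row_free_inj (row_base_free A).
by rewrite cardsT card_mx mul1n.
Qed.

Lemma rank_col_rV p s (u : 'rV[K]_s) (X : 'M[K]_(p,s)) :
  \rank (col_mx u X) = (\rank X + ~~ (u <= X)%MS)%N.
Proof.
rewrite -addsmxE addsmxC.
have [h|h] := boolP (u <= X)%MS.
  by rewrite (addsmx_idPl h) addn0.
have := mxrank_sum_cap X u.
have u0 : u != 0 by apply: contraNneq h => ->; rewrite sub0mx.
rewrite rank_rV u0 /=.
have : (\rank (X :&: u)%MS <= \rank u)%N by rewrite mxrankS // capmxSr.
rewrite rank_rV u0 /=.
case: (\rank (X :&: u)%MS) (mxrank_leqif_sup (capmxSr X u)) => [|[|//]] H.
  move=> _ E; rewrite addn1; move: E; lia.
move=> _; exfalso; case: H => _; rewrite rank_rV u0 eqxx => /esym hh.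
by move/negP: h; apply; apply: submx_trans hh _; rewrite capmxSl.
Qed.

End Core.

Section Count.
Variable K : finFieldType.
Local Notation q := #|K|.

Definition cnt p s (F : 'M[K]_s) r :=
  #|[set X : 'M[K]_(p,s) | (\rank X == r) && (X <= F)%MS]|.

Lemma card_sum (T : finType) (P : pred T) : #|[set x | P x]| = (\sum_x (P x : nat))%N.
Proof.
rewrite -sum1_card big_mkcond /=; apply: eq_bigr => x _; rewrite inE; by case: (P x).
Qed.

Lemma cnt_step p s (F : 'M[K]_s) (r : nat) :
  cnt p.+1 F r = (\sum_(X : 'M[K]_(p,s) | (X <= F)%MS)
     ((\rank X == r) * q ^ \rank X + ((\rank X).+1 == r) * (q ^ \rank F - q ^ \rank X)))%N.
Proof.
rewrite /cnt.
have -> : #|[set Y : 'M[K]_(p.+1, s) | (\rank Y == r) && (Y <= F)%MS]| =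
  #|[set ux : 'rV[K]_s * 'M[K]_(p,s) | (\rank (col_mx ux.1 ux.2) == r) && (col_mx ux.1 ux.2 <= F)%MS]|.
  rewrite -(on_card_preimset (f := fun ux : 'rV[K]_s * 'M[K]_(p,s) => col_mx ux.1 ux.2)).
    by apply: eq_card => ux; rewrite !inE.
  have bij : bijective (fun ux : 'rV[K]_s * 'M[K]_(p,s) => col_mx ux.1 ux.2).
    apply: (@Bijective _ _ _ (fun Y : 'M[K]_(1+p,s) => (usubmx Y, dsubmx Y))) => [[u X]|Y] /=.
      by rewrite col_mxKu col_mxKd.
    by rewrite vsubmxK.
  exact: onW_bij bij.
rewrite card_sum -(pair_big xpredT xpredT (fun u X => ((\rank (col_mx u X) == r) && (col_mx u X <= F)%MS : nat))) /=.
rewrite exchange_big /= [RHS]big_mkcond /=; apply: eq_bigr => X _.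
case: (boolP (X <= F)%MS) => hXF; last first.
  by rewrite big1 // => u _; rewrite col_mx_sub (negbTE hXF) !andbF.
set a := \rank X.
have E1 : forall u : 'rV[K]_s, ((\rank (col_mx u X) == r) && (col_mx u X <= F)%MS : nat)
   = ((a == r) * ((u <= X)%MS : nat) + (a.+1 == r) * ((u <= F)%MS && ~~ (u <= X)%MS))%N.
  move=> u; rewrite rank_col_rV col_mx_sub hXF andbT -/a.
  case: (boolP (u <= X)%MS) => hu /=.
    by rewrite (submx_trans hu hXF) addn0 muln1 muln0 addn0; case: (a == r).
  by rewrite addn1 muln0 add0n; case: (u <= F)%MS; case: (a.+1 == r).
rewrite (eq_bigr _ (fun u _ => E1 u)) big_split /= -!big_distrr /=.
have cX : (\sum_(u : 'rV[K]_s) ((u <= X)%MS : nat) = q ^ a)%N.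
  by rewrite -card_sum card_rowspace.
have cF : (\sum_(u : 'rV[K]_s) ((u <= F)%MS : nat) = q ^ \rank F)%N.
  by rewrite -card_sum card_rowspace.
have cD : (\sum_(u : 'rV[K]_s) (((u <= F)%MS && ~~ (u <= X)%MS) : nat) = q ^ \rank F - q ^ a)%N.
  rewrite -cF -cX; have -> : (\sum_(u : 'rV[K]_s) ((u <= F)%MS : nat) =
     \sum_(u : 'rV[K]_s) ((u <= X)%MS : nat) + \sum_(u : 'rV[K]_s) (((u <= F)%MS && ~~ (u <= X)%MS) : nat))%N.
    rewrite -big_split; apply: eq_bigr => u _ /=.
    case: (boolP (u <= X)%MS) => hu /=; last by rewrite add0n andbT.
    by rewrite (submx_trans hu hXF).
  by rewrite addKn.
by rewrite cX cD.
Qed.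

End Count.

Section Count2.
Variable K : finFieldType.
Local Notation q := #|K|.

Lemma q_gt1 : (1 < q)%N. Proof. exact: card_finNzRing_gt1. Qed.

Lemma cnt_sum p s (F : 'M[K]_s) r :
  cnt p F r = (\sum_(X : 'M[K]_(p,s) | (X <= F)%MS) (\rank X == r : nat))%N.
Proof.
rewrite /cnt card_sum [RHS]big_mkcond /=; apply: eq_bigr => X _.
by case: (X <= F)%MS; rewrite ?andbT ?andbF.
Qed.

Lemma cnt_gt p s (F : 'M[K]_s) r : (\rank F < r)%N -> cnt p F r = 0%N.
Proof.
move=> h; rewrite cnt_sum big1 // => X hX.
have : (\rank X <= \rank F)%N by apply: mxrankS.
by case: eqP => // ->; rewrite leqNgt h.
Qed.

Lemma cnt_step0 p s (F : 'M[K]_s) : cnt p.+1 F 0 = cnt p F 0.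
Proof.
rewrite cnt_step cnt_sum; apply: eq_bigr => X _.
by case: eqP => [->|_] //=; rewrite ?expn0 ?mul0n ?add0n ?addn0.
Qed.

Lemma cnt_stepS p s (F : 'M[K]_s) r :
  cnt p.+1 F r.+1 = (cnt p F r.+1 * q ^ r.+1 + cnt p F r * (q ^ \rank F - q ^ r))%N.
Proof.
rewrite cnt_step !cnt_sum !big_distrl -big_split /=; apply: eq_bigr => X _.
rewrite eqSS.
by case: eqP => [->|_]; case: eqP => [->|_]; rewrite ?mul0n ?mul1n.
Qed.

Lemma cnt0 s (F : 'M[K]_s) r : cnt 0 F r = (r == 0)%N.
Proof.
rewrite cnt_sum (eq_bigr (fun _ => (r == 0 : nat))).
  rewrite sum_nat_const.
  have -> : #|[pred X : 'M[K]_(0,s) | (X <= F)%MS]| = 1%N.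
    by apply: (@eq_card1 _ (0 : 'M[K]_(0,s))) => X; rewrite !inE (flatmx0 X) eqxx sub0mx.
  by rewrite mul1n.
by move=> X _; rewrite (flatmx0 X) mxrank0 eq_sym.
Qed.

End Count2.

Section Real.
Variable R : realFieldType.
Variable K : finFieldType.
Local Notation q := #|K|.
Local Notation Q := (q%:R : R).

Definition Pp n r : R := \prod_(j < r) (Q ^+ n - Q ^+ j).

Lemma Q_neq0 : Q != 0.
Proof. by rewrite pnatr_eq0 -lt0n ltnW // q_gt1. Qed.

Lemma QX_inj a b : (Q ^+ a == Q ^+ b) = (a == b).
Proof.
by rewrite -!natrX eqr_nat eqn_exp2l // q_gt1.
Qed.

Lemma Pp_recr n r : Pp n r.+1 = Pp n r * (Q ^+ n - Q ^+ r).
Proof. by rewrite /Pp big_ord_recr. Qed.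

Lemma Pp_S n r : Pp n.+1 r.+1 = (Q ^+ n.+1 - 1) * Q ^+ r * Pp n r.
Proof.
rewrite /Pp big_ord_recl expr0 -mulrA; congr (_ * _).
rewrite (eq_bigr (fun j : 'I_r => Q * (Q ^+ n - Q ^+ j))); last first.
  by move=> j _; rewrite lift0 !exprS mulrBr.
by rewrite big_split /= prodr_const card_ord.
Qed.

Lemma Pp0S r : Pp 0 r.+1 = 0.
Proof. by rewrite /Pp big_ord_recl expr0 subrr mul0r. Qed.

Lemma Pprr_neq0 r : Pp r r != 0.
Proof.
apply/prodf_neq0 => j _; rewrite subr_eq0 QX_inj.
by rewrite neq_ltn ltn_ord orbT.
Qed.

Lemma cnt_Pp p s (F : 'M[K]_s) r :
  (cnt p F r)%:R * Pp r r = Pp p r * Pp (\rank F) r.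
Proof.
elim: p r => [|p IH] r.
  rewrite cnt0; case: r => [|r] /=; first by rewrite /Pp !big_ord0 !mulr1.
  by rewrite Pp0S !mul0r.
case: r => [|r].
  by rewrite (cnt_step0 p F) IH /Pp !big_ord0.
have IH1 := IH r.+1; have IH0 := IH r.
have E : (cnt p.+1 F r.+1)%:R =
   (cnt p F r.+1)%:R * Q ^+ r.+1 + (cnt p F r)%:R * (Q ^+ \rank F - Q ^+ r) :> R.
  rewrite cnt_stepS natrD natrM natrX; congr (_ + _).
  have [le|lt] := leqP r (\rank F).
    by rewrite natrM natrB ?leq_exp2l ?q_gt1 // !natrX.
  by rewrite cnt_gt // !mul0r natrM mul0r.
rewrite E.
move: IH1 IH0; rewrite !Pp_S !Pp_recr !exprSr.
set c1 := (cnt p F r.+1)%:R; set c0 := (cnt p F r)%:R.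
set x := Q ^+ r; set y := Q ^+ p; set z := Q ^+ \rank F.
set D0 := Pp r r; set P0 := Pp p r; set Q0 := Pp (\rank F) r.
move=> IH1 IH0.
have -> : (c1 * (x * Q) + c0 * (z - x)) * ((x * Q - 1) * x * D0) =
   (c1 * ((x * Q - 1) * x * D0)) * (x * Q) + (c0 * D0) * ((z - x) * (x * Q - 1) * x) by ring.
rewrite IH1 IH0; ring.
Qed.


Lemma cnt_NM p s (F : 'M[K]_s) r :
  (cnt p F r)%:R = NM R q p (\rank F) r.
Proof.
apply: (mulIf (Pprr_neq0 r)); rewrite cnt_Pp /NM prodf_div big_split /= divfK //.
exact: Pprr_neq0.
Qed.

End Real.

Section Block.
Variable K : finFieldType.

Definition cntB m eta (Fi : 'M[K]_(minn m eta)) r :=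
  #|[set B : 'M[K]_(m,eta) | (\rank B == r) && (blk_supp B <= Fi)%MS]|.

Lemma conf1 (p n n' : nat) (e : n = n') (F' : 'M[K]_n') r :
 #|[set B : 'M[K]_(p,n) | (\rank B == r) && (<<conform_mx (0 : 'M[K]_(p,n')) B>> <= F')%MS]|
  = cnt p F' r.
Proof.
subst n'; rewrite /cnt; apply: eq_card => B; by rewrite !inE conform_mx_id genmxE.
Qed.

Lemma conf2 (p n p' : nat) (e : p = p') (F' : 'M[K]_p') r :
 #|[set B : 'M[K]_(p,n) | (\rank B == r) && (<<conform_mx (0 : 'M[K]_(n,p')) B^T>> <= F')%MS]|
  = cnt n F' r.
Proof.
subst p'; rewrite /cnt.
rewrite -(on_card_preimset (f := @trmx K p n)).
  by apply: eq_card => B; rewrite !inE conform_mx_id genmxE mxrank_tr.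
apply: onW_bij; apply: (@Bijective _ _ _ (@trmx K n p)); exact: trmxK.
Qed.

Lemma blk_cnt m eta (Fi : 'M[K]_(minn m eta)) r :
  cntB Fi r = if (eta <= m)%N then cnt m Fi r else cnt eta Fi r.
Proof.
rewrite /cntB /blk_supp; case: (boolP (eta <= m)%N) => h.
  by rewrite conf1 //; rewrite (minn_idPr h).
rewrite conf2 //.
by rewrite (minn_idPl (ltnW _)) // ltnNge.
Qed.

End Block.

Section Alg.
Variable R : realFieldType.
Variable K : finFieldType.
Local Notation q := #|K|.
Local Notation Q := (q%:R : R).

Definition G d r : R := \prod_(j < r) ((Q ^+ d - Q ^+ j) / (Q ^+ r - Q ^+ j)).

Lemma NM_PG a d r : NM R q a d r = Pp R K a r * G d r.
Proof.
rewrite /NM /Pp /G -big_split /=; apply: eq_bigr => j _; by rewrite mulrA.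
Qed.

Lemma NM_sym a b r : NM R q a b r = NM R q b a r.
Proof. by apply: eq_bigr => j _; rewrite (mulrC (Q ^+ a - _)). Qed.

Lemma gaussE d r : (r <= d)%N -> gauss_binom R q d r = G d r.
Proof.
move=> rd; apply: eq_bigr => j _.
have jd : (j <= d)%N by apply: leq_trans (ltnW (ltn_ord j)) rd.
have jr : (j <= r)%N by apply: ltnW (ltn_ord j).
have e1 : Q ^+ d - Q ^+ j = Q ^+ j * (Q ^+ (d - j) - 1) by rewrite mulrBr mulr1 -exprD subnKC.
have e2 : Q ^+ r - Q ^+ j = Q ^+ j * (Q ^+ (r - j) - 1) by rewrite mulrBr mulr1 -exprD subnKC.
rewrite e1 e2 -mulf_div divff ?mul1r // expf_neq0 //; exact: Q_neq0.
Qed.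

Lemma G_neq0 b r : (r <= b)%N -> G b r != 0.
Proof.
move=> rb; apply/prodf_neq0 => j _.
apply: mulf_neq0; last rewrite invr_eq0; rewrite subr_eq0 QX_inj neq_ltn.
  by rewrite (leq_trans (ltn_ord j) rb) orbT.
by rewrite ltn_ord orbT.
Qed.

Lemma NM_Phi a b d r : (d <= b)%N -> (r <= b)%N ->
  NM R q a d r = NM R q a b r * Phi R q b r d.
Proof.
move=> db rb; rewrite /Phi; case: leqP => rd.
  rewrite !gaussE // ?(leq_trans rd db) // !NM_PG -mulrA (mulrC (G b r)) divfK //.
  exact: G_neq0.
rewrite mulr0; apply/eqP/prodf_eq0; exists (Ordinal rd) => //=.
by rewrite subrr mulr0 mul0r.
Qed.

End Alg.

Lemma card_fam (aT rT : finType) (P : aT -> pred rT) :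
  #|[set f : {ffun aT -> rT} | [forall x, P x (f x)]]| = (\prod_x #|P x|)%N.
Proof.
have -> : #|[set f : {ffun aT -> rT} | [forall x, P x (f x)]]| = #|(family P : simpl_pred {ffun aT -> rT})|.
  apply: eq_card => f; rewrite inE; apply/forallP/familyP => h x; exact: h.
by rewrite card_family foldrE big_map big_enum.
Qed.

Section Block2.
Variable R : realFieldType.
Variable K : finFieldType.
Local Notation q := #|K|.

Lemma blk_NM m eta (Fi : 'M[K]_(minn m eta)) r d :
  \rank Fi = d -> (d <= minn m eta)%N -> (r <= minn m eta)%N ->
  (cntB Fi r)%:R = NM R q m eta r * Phi R q (minn m eta) r d :> R.
Proof.
move=> hF hd hr; rewrite blk_cnt; case: (boolP (eta <= m)%N) => h.
  rewrite cnt_NM hF; move: hd hr; rewrite (minn_idPr h) => hd hr.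
  exact: NM_Phi.
rewrite cnt_NM hF; move: hd hr; rewrite (minn_idPl (ltnW _)) ?ltnNge // => hd hr.
rewrite [NM R q m eta r]NM_sym; exact: NM_Phi.
Qed.

Lemma NMPhi_ge0 m eta r d : (d <= minn m eta)%N -> (r <= minn m eta)%N ->
  0 <= NM R q m eta r * Phi R q (minn m eta) r d.
Proof.
move=> hd hr; rewrite -(@blk_NM m eta (pid_mx d : 'M[K]_(minn m eta))) //.
by rewrite rank_pid_mx.
Qed.

End Block2.

Lemma sum1_pred (T : finType) (P : pred T) : (\sum_(i | P i) 1)%N = #|[set i | P i]|.
Proof. by rewrite card_sum big_mkcond; apply: eq_bigr => i _; case: (P i). Qed.

Section GoodCount.
Variable K : finFieldType.

Lemma rank_le_mu m eta (B : 'M[K]_(m,eta)) : (\rank B < (minn m eta).+1)%N.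
Proof. by rewrite ltnS leq_min rank_leq_row rank_leq_col. Qed.

Lemma good_count m eta l w (F : {ffun 'I_l -> 'M[K]_(minn m eta)}) :
  #|[set z : vecT K m eta l | good w F z]| =
  (\sum_(ww in Wset l (minn m eta) w) \prod_(i < l) cntB (F i) (ww i))%N.
Proof.
rewrite -sum1_pred.
pose pz := fun z : vecT K m eta l =>
  [ffun i => (inord (\rank (z i)) : 'I_(minn m eta).+1)].
rewrite (partition_big pz (mem (Wset l (minn m eta) w))); last first.
  move=> z /andP [/eqP hw _]; rewrite /= /Wset inE -hw /wtSR; apply/eqP.
  by apply: eq_bigr => i _; rewrite /pz ffunE inordK // rank_le_mu.
apply: eq_bigr => ww hww; rewrite sum1_pred /cntB.
transitivity (#|[set z : {ffun 'I_l -> 'M[K]_(m,eta)} | [forall i, (fun i => [pred B : 'M[K]_(m,eta) | (\rank B == ww i) && (blk_supp B <= F i)%MS]) i (z i)]]|); last first.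
  rewrite (card_fam (fun i => [pred B : 'M[K]_(m,eta) | (\rank B == ww i) && (blk_supp B <= F i)%MS])); apply: eq_bigr => i _; apply: eq_card => B; by rewrite inE.
apply: eq_card => z; rewrite !inE.
move: hww; rewrite /= /Wset !inE => /eqP hww.
apply/idP/idP.
  case/andP => /andP [_ /forallP hF] /eqP hp; apply/forallP => i /=.
  rewrite hF andbT -hp ffunE inordK //; exact: rank_le_mu.
move/forallP => h.
have hr : forall i, \rank (z i) = ww i by move=> i; case/andP: (h i) => /eqP.
rewrite /good /wtSR (eq_bigr (fun i => (ww i : nat))); last by move=> i _; rewrite hr.
rewrite hww eqxx /=; apply/andP; split.
  by apply/forallP => i; case/andP: (h i).
apply/eqP/ffunP => i; rewrite ffunE; apply: val_inj => /=; by rewrite inordK hr // rank_le_mu.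
Qed.

End GoodCount.

Section Union.
Variable R : realFieldType.
Variable K : finFieldType.

Lemma card_vec_gt0 m eta l : (0 < #|{: vecT K m eta l}|)%N.
Proof.
by rewrite /vecT card_ffun card_mx expn_gt0 expn_gt0 (ltnW (q_gt1 K)).
Qed.

Lemma union_card (T : finType) N (P : pred T) :
  (#|[set c : {ffun 'I_N -> T} | [exists j, P (c j)]]| <= N * (#|[set x | P x]| * #|T| ^ N.-1))%N.
Proof.
have E : forall j : 'I_N, #|[set c : {ffun 'I_N -> T} | P (c j)]| = (#|[set x | P x]| * #|T| ^ N.-1)%N.
  move=> j.
  transitivity (#|[set c : {ffun 'I_N -> T} | [forall i, (fun i => if i == j then [pred x | P x] else predT) i (c i)]]|).
    apply: eq_card => c; rewrite !inE; apply/idP/forallP => [h i|h].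
      by case: eqP => [->|]; rewrite ?inE.
    by have := h j; rewrite eqxx inE.
  rewrite (card_fam (fun i => if i == j then [pred x | P x] else predT)) (bigD1 j) //= eqxx.
  congr (_ * _)%N; first by apply: eq_card => x; rewrite !inE.
  rewrite (eq_bigr (fun _ => #|T|)); last by move=> i /negbTE ->; apply: eq_card.
  by rewrite prod_nat_const cardC1 card_ord.
have -> : (N * (#|[set x | P x]| * #|T| ^ N.-1) = \sum_(j < N) #|[set c : {ffun 'I_N -> T} | P (c j)]|)%N.
  by rewrite (eq_bigr _ (fun j _ => E j)) big_const_ord iter_addn_0 mulnC.
rewrite card_sum.
rewrite (eq_bigr (fun j => \sum_(c : {ffun 'I_N -> T}) (P (c j) : nat))%N); last first.
  by move=> j _; rewrite (card_sum (fun c : {ffun 'I_N -> T} => P (c j))).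
rewrite exchange_big leq_sum // => c _.
case: (boolP [exists j, P (c j)]) => // /existsP [j hj].
by rewrite (bigD1 j) //= hj.
Qed.

End Union.

Section PC.
Variable R : realFieldType.
Variable K : finFieldType.

Lemma pc_bound m eta l w N (F : {ffun 'I_l -> 'M[K]_(minn m eta)}) (y : vecT K m eta l) :
  prob_codewords R w N F y <=
  N%:R * (#|[set z : vecT K m eta l | good w F z]|)%:R / (#|{: vecT K m eta l}|)%:R.
Proof.
rewrite /prob_codewords.
have hT := card_vec_gt0 K m eta l.
set T := #|{: vecT K m eta l}| in hT *.
pose f := fun x : vecT K m eta l => [ffun i => y i - x i] : vecT K m eta l.
have finj : injective f.
  move=> x1 x2 /ffunP e; apply/ffunP => i; move: (e i); rewrite !ffunE; exact: subrI.
have ha : #|[set x : vecT K m eta l | good w F (f x)]| = #|[set z : vecT K m eta l | good w F z]|.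
  rewrite -(card_preimset [set z : vecT K m eta l | good w F z] finj).
  by apply: eq_card => x; rewrite !inE.
have hu := union_card N (fun x : vecT K m eta l => good w F (f x)).
rewrite ha in hu.
set a := #|[set z : vecT K m eta l | good w F z]| in hu *.
apply: le_trans (_ : (N * (a * T ^ N.-1))%:R / (T ^ N)%:R <= _).
  by apply: ler_wpM2r; [rewrite invr_ge0 ler0n | rewrite ler_nat; exact: hu].
case: N {hu} => [|N]; first by rewrite mul0n !mul0r.
have T0 : (T%:R : R) != 0 by rewrite pnatr_eq0 -lt0n.
rewrite /= expnS !natrM natrX le_eqVlt; apply/orP; left; apply/eqP; field; by rewrite T0 expf_neq0.
Qed.

End PC.

Lemma sumr_const_pred (R : realFieldType) (T : finType) (P : pred T) (c : R) :
  \sum_(i | P i) c = (#|[set i | P i]|)%:R * c.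
Proof.
rewrite card_sum natr_sum big_distrl big_mkcond /=; apply: eq_bigr => i _.
by case: (P i); rewrite ?mul1r ?mul0r.
Qed.

Unset Implicit Arguments.

Theorem mainTheorem4 (R : realFieldType) (K : finFieldType) (m eta l k v w : nat)
  (alpha : {ffun 'I_l -> 'I_(minn m eta).+1} -> R) (y : vecT K m eta l) :
  (1 <= m)%N -> (1 <= eta)%N -> (1 <= l)%N -> (1 <= k)%N ->
  (w <= v)%N -> (v <= l * minn m eta)%N ->
  (forall vv, 0 <= alpha vv) ->
  (forall vv, vv \notin Wset l (minn m eta) v -> alpha vv = 0) ->
  \sum_(vv in Wset l (minn m eta) v) alpha vv = 1 ->
  probX v w (#|K| ^ (m * k) - 1) alpha y <=
    (#|K|%:R : R) ^ ((m%:Z) * (k%:Z - (l * eta)%:Z))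
    * \sum_(ww in Wset l (minn m eta) w)
        phibar #|K| v alpha ww * \prod_(i < l) NM R #|K| m eta (ww i).
Proof.
move=> hm heta hl hk hwv hv ha0 haW hasum.
set N := (#|K| ^ (m * k) - 1)%N.
set T := #|{: vecT K m eta l}|.
pose c := (N%:R / T%:R : R).
pose C := fun vv : {ffun 'I_l -> 'I_(minn m eta).+1} =>
  c * \sum_(ww in Wset l (minn m eta) w)
        \prod_(i < l) (NM R #|K| m eta (ww i) * Phi R #|K| (minn m eta) (ww i) (vv i)).
have c0 : 0 <= c by rewrite /c divr_ge0 ?ler0n.
have C0 : forall vv, 0 <= C vv.
  move=> vv; rewrite mulr_ge0 // sumr_ge0 // => ww _; apply: prodr_ge0 => i _.
  by apply: NMPhi_ge0; rewrite -ltnS; apply: ltn_ord.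
have step1 : probX v w N alpha y <= \sum_(vv in Wset l (minn m eta) v) alpha vv * C vv.
  rewrite /probX; apply: ler_sum => vv _; apply: (ler_wpM2l (ha0 vv)).
  set x := \prod_(i < l) (#|subspaces K (minn m eta) (vv i)|)%:R.
  apply: le_trans (_ : \sum_(F : {ffun 'I_l -> 'M[K]_(minn m eta)}
           | [forall i, F i \in subspaces K (minn m eta) (vv i)]) (x^-1 * C vv) <= _).
    apply: ler_sum => F hF; apply: ler_wpM2l; first by rewrite invr_ge0 /x prodr_ge0.
    apply: le_trans; first exact: pc_bound.
    rewrite /C /c good_count natr_sum mulrAC; apply: ler_wpM2l; first by rewrite divr_ge0 ?ler0n.
    rewrite le_eqVlt; apply/orP; left; apply/eqP.
    apply: eq_bigr => ww _; rewrite natr_prod; apply: eq_bigr => i _.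
    have hFi : F i \in subspaces K (minn m eta) (vv i) by move/forallP: hF; apply.
    move: hFi; rewrite inE => /andP [_ /eqP hr].
    by apply: blk_NM; [exact: hr| rewrite -ltnS; apply: ltn_ord | rewrite -ltnS; apply: ltn_ord].
  rewrite sumr_const_pred.
  have -> : (#|[set F : {ffun 'I_l -> 'M[K]_(minn m eta)} |
           [forall i, F i \in subspaces K (minn m eta) (vv i)]]|)%:R = x.
    rewrite (card_fam (fun i => mem (subspaces K (minn m eta) (vv i)))) natr_prod.
    by apply: eq_bigr => i _; congr (_%:R); apply: eq_card => B.
  have [->|x0] := eqVneq x 0; first by rewrite mul0r C0.
  by rewrite mulVKf.
have step2 : \sum_(vv in Wset l (minn m eta) v) alpha vv * C vv =
   c * \sum_(ww in Wset l (minn m eta) w)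
        phibar #|K| v alpha ww * \prod_(i < l) NM R #|K| m eta (ww i).
  rewrite mulr_sumr /phibar.
  under [RHS]eq_bigr do rewrite mulr_suml mulr_sumr.
  rewrite [RHS]exchange_big /=; apply: eq_bigr => vv _.
  rewrite /C mulr_sumr mulr_sumr; apply: eq_bigr => ww _.
  rewrite big_split /=; ring.
have S0 : 0 <= \sum_(ww in Wset l (minn m eta) w)
        phibar #|K| v alpha ww * \prod_(i < l) NM R #|K| m eta (ww i).
  apply: sumr_ge0 => ww _; rewrite /phibar mulr_suml; apply: sumr_ge0 => vv _.
  rewrite -mulrA -big_split /=; apply: mulr_ge0 => //; apply: prodr_ge0 => i _.
  by rewrite mulrC; apply: NMPhi_ge0; rewrite -ltnS; apply: ltn_ord.
apply: le_trans step1 _; rewrite step2; apply: (ler_wpM2r S0).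
have Q0 : (#|K|%:R : R) != 0 by exact: Q_neq0.
have -> : (#|K|%:R : R) ^ ((m%:Z) * (k%:Z - (l * eta)%:Z)) =
    (#|K|%:R : R) ^+ (m * k) / (#|K|%:R : R) ^+ (m * (l * eta)).
  by rewrite mulrBr -!PoszM expfzDr // -exprnN.
have -> : (#|K|%:R : R) ^+ (m * (l * eta)) = T%:R.
  rewrite /T card_ffun card_mx card_ord -expnM natrX; congr (_ ^+ _); lia.
rewrite /c; apply: ler_wpM2r; first by rewrite invr_ge0 ler0n.
by rewrite -natrX ler_nat /N leq_subr.
Qed.
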